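(* Let $\Omega\subseteq\mathbb R^N$ be an open set with bounded inner radius $R:=\sup_{x\in\Omega}\operatorname{dist}(x,\partial\Omega)<\infty$, let $\alpha,\beta\ge0$, $r_0>0$ and $\lambda>1$. There exist $c,C>0$ depending only on $N,R,\alpha,\beta,r_0,\lambda$ such that for every $u:\Omega\to\mathbb R$, $$c\|u\|^{(\beta)}_{\mathcal L^\alpha(\Omega)}\le\sup_{\substack{B_{\lambda r}(x)\subseteq\Omega\\ r\in(0,r_0)}}\Big(\ell^\beta(r)\|u\|_{L^\infty(B_r(x))}+\ell^{\alpha+\beta}(r)[u]_{\mathcal L^\alpha(B_r(x))}\Big)\le C\|u\|^{(\beta)}_{\mathcal L^\alpha(\Omega)},$$ meaning that either all three quantities are finite and the inequalities hold, or all three are infinite.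
   Context: $\ell(\rho):=|\ln(\min\{\rho,1/10\})|^{-1}$ for $\rho>0$, $\ell(0):=0$. For an open set $U$, $d(x):=\operatorname{dist}(x,\partial U)$, $d(x,y):=\min(d(x),d(y))$. For $\alpha,\beta\ge0$ and $u:U\to\mathbb R$: $[u]_{\mathcal L^\alpha(U)}:=\sup_{x\ne y\in U}\frac{|u(x)-u(y)|}{\ell^\alpha(|x-y|)}$, $[u]^{(\beta)}_{\mathcal L^\alpha(U)}:=\sup_{x\neq y\in U}\ell^{\alpha+\beta}(d(x,y))\frac{|u(x)-u(y)|}{\ell^\alpha(|x-y|)}$, $\|u\|^{(\beta)}_{\mathcal L^\alpha(U)}:=\sup_{x\in U}\ell^\beta(d(x))|u(x)|+[u]^{(\beta)}_{\mathcal L^\alpha(U)}$. *)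

(* Defs.v *)
From HB Require Import structures.
From mathcomp Require Import all_boot all_order all_algebra.
From mathcomp Require Import all_classical all_reals all_analysis.
Set Implicit Arguments. Unset Strict Implicit. Unset Printing Implicit Defensive.
Import Order.TTheory GRing.Theory Num.Theory.
Local Open Scope classical_set_scope.
Local Open Scope ring_scope.

Definition ell {R : realType} (rho : R) : R :=
  if 0 < rho then `|ln (Order.min rho (10%:R)^-1)|^-1 else 0.

Section Defs.
Variables (R : realType) (N : nat).
Local Notation pt := ('I_N -> R).

Definition edist (x y : pt) : R := Num.sqrt (\sum_(i < N) (x i - y i) ^+ 2).

Definition eball (x : pt) (r : R) : set pt := [set y | edist x y < r].

Definition eopen (U : set pt) : Prop :=
  forall x, U x -> exists2 e : R, 0 < e & eball x e `<=` U.

Definition eboundary (U : set pt) : set pt :=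
  [set y | forall e : R, 0 < e ->
     (exists z, eball y e z /\ U z) /\ (exists z, eball y e z /\ ~ U z)].

(* dist(x, boundary U) in the extended reals (+oo if the boundary is empty) *)
Definition edist_bd (U : set pt) (x : pt) : \bar R :=
  ereal_inf [set (edist x y)%:E | y in eboundary U].

Definition inner_radius (U : set pt) : \bar R :=
  ereal_sup [set edist_bd U x | x in U].

(* d(x) as a real number (finite whenever the inner radius is finite) *)
Definition dU (U : set pt) (x : pt) : R := fine (edist_bd U x).
Definition dU2 (U : set pt) (x y : pt) : R := Order.min (dU U x) (dU U y).

(* supremum of a set of nonnegative quantities (0 for the empty set) *)
Definition esup0 (S : set (\bar R)) : \bar R := ereal_sup ([set 0%E] `|` S).

Definition Lsemi (a : R) (U : set pt) (u : pt -> R) : \bar R :=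
  esup0 [set z | exists x y, [/\ U x, U y, x <> y &
          z = (`|u x - u y| / powR (ell (edist x y)) a)%:E]].

Definition Lsemiw (a b : R) (U : set pt) (u : pt -> R) : \bar R :=
  esup0 [set z | exists x y, [/\ U x, U y, x <> y &
          z = (powR (ell (dU2 U x y)) (a + b) * `|u x - u y|
                 / powR (ell (edist x y)) a)%:E]].

Definition Lnormw (a b : R) (U : set pt) (u : pt -> R) : \bar R :=
  (esup0 [set (powR (ell (dU U x)) b * `|u x|)%:E | x in U] + Lsemiw a b U u)%E.

(* sup norm of u on U (the L^infty norm, as a pointwise supremum) *)
Definition supnorm (U : set pt) (u : pt -> R) : \bar R :=
  esup0 [set (`|u x|)%:E | x in U].

Definition local_quantity (a b r0 lam : R) (Om : set pt) (u : pt -> R) : \bar R :=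
  esup0 [set z | exists x (r : R), [/\ 0 < r, r < r0, eball x (lam * r) `<=` Om &
          z = ((powR (ell r) b)%:E * supnorm (eball x r) u
               + (powR (ell r) (a + b))%:E * Lsemi a (eball x r) u)%E]].

End Defs.

(* Main.v *)
From Pilot Require Import Defs.
From HB Require Import structures.
From mathcomp Require Import all_boot all_order all_algebra.
From mathcomp Require Import all_classical all_reals all_analysis.
From mathcomp Require Import ring lra.
Import Order.TTheory GRing.Theory Num.Theory.
Local Open Scope classical_set_scope.
Local Open Scope ring_scope.
Set Implicit Arguments. Unset Strict Implicit.
Local Notation edist := Pilot.Defs.edist.

Section Aux.
Variable R : realType.

Lemma esup0_le (S : set (\bar R)) (B : \bar R) :
  (0 <= B)%E -> (forall z, S z -> (z <= B)%E) -> (esup0 S <= B)%E.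
Proof. by move=> B0 H; apply: ge_ereal_sup => z [->|/H]. Qed.

Lemma le_esup0 (S : set (\bar R)) z : S z -> (z <= esup0 S)%E.
Proof. by move=> Sz; apply: ereal_sup_ubound; right. Qed.

Lemma esup0_ge0 (S : set (\bar R)) : (0 <= esup0 S)%E.
Proof. by apply: ereal_sup_ubound; left. Qed.

Definition gg (rho : R) : R := - ln (Order.min rho (10%:R)^-1).

Lemma ln10_gt0 : 0 < ln (10%:R : R).
Proof. by apply: ln_gt0; rewrite ltr1n. Qed.

Lemma min_pos (rho : R) : 0 < rho -> 0 < Order.min rho (10%:R)^-1.
Proof. by move=> r0; rewrite lt_min r0 invr_gt0 ltr0n. Qed.

Lemma gg_ge (rho : R) : 0 < rho -> ln 10%:R <= gg rho.
Proof.
move=> r0; rewrite /gg lerNr -lnV ?posrE ?ltr0n //.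
by rewrite ler_ln ?posrE ?min_pos ?invr_gt0 ?ltr0n // ge_min lexx orbT.
Qed.

Lemma ellE (rho : R) : 0 < rho -> ell rho = (gg rho)^-1.
Proof.
move=> r0; rewrite /ell; rewrite r0 /gg ler0_norm //.
have := gg_ge r0; rewrite /gg => h; rewrite -oppr_ge0; apply: le_trans h.
exact: ltW ln10_gt0.
Qed.

Lemma ell_gt0 (rho : R) : 0 < rho -> 0 < ell rho.
Proof.
move=> r0; rewrite ellE // invr_gt0; apply: lt_le_trans (gg_ge r0).
exact: ln10_gt0.
Qed.

Lemma ell_ge0 (rho : R) : 0 <= ell rho.
Proof. by rewrite /ell; case: ifP => // _; rewrite invr_ge0. Qed.

Definition KK (k : R) : R := 1 + ln k / ln 10%:R.

Lemma KK_ge1 k : 1 <= k -> 1 <= KK k.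
Proof.
move=> k1; rewrite /KK lerDl divr_ge0 //; [exact: ln_ge0 | exact: ltW ln10_gt0].
Qed.

Lemma ell_cmp (k rho sig : R) : 1 <= k -> 0 < sig -> 0 < rho ->
  rho <= k * sig -> ell rho <= KK k * ell sig.
Proof.
move=> k1 s0 r0 rks.
have k0 : 0 < k by apply: lt_le_trans k1.
rewrite !ellE //.
have g0 := ln10_gt0.
have gr := gg_ge r0; have gs := gg_ge s0.
have gr0 : 0 < gg rho by apply: lt_le_trans gr.
have gs0 : 0 < gg sig by apply: lt_le_trans gs.
rewrite -[X in X <= _]mul1r ler_pdivrMr // mulrAC ler_pdivlMr //.
(* gg sig <= KK k * gg rho *)
have hm : Order.min rho (10%:R)^-1 / k <= Order.min sig (10%:R)^-1.
  rewrite le_min; apply/andP; split.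
    rewrite ler_pdivrMr // mulrC; apply: le_trans rks.
    by rewrite ge_min lexx.
  rewrite ler_pdivrMr // ge_min; apply/orP; right.
  by rewrite ler_peMr // invr_ge0 ler0n.
have hs : gg sig <= gg rho + ln k.
  rewrite /gg -lnV ?posrE ?min_pos // -[X in _ <= X + _]lnV ?posrE ?min_pos //.
  rewrite -lnM ?posrE ?invr_gt0 ?min_pos //.
  rewrite ler_ln ?posrE ?mulr_gt0 ?invr_gt0 ?min_pos //.
  have -> : (Num.min rho 10%:R^-1)^-1 * k = (Num.min rho 10%:R^-1 / k)^-1.
    by rewrite invfM invrK.
  by rewrite lef_pV2 ?posrE ?divr_gt0 ?min_pos.
rewrite mul1r; apply: (le_trans hs); rewrite /KK mulrDl mul1r lerD2l.
rewrite mulrAC ler_pdivlMr //.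
by rewrite ler_wpM2l // ln_ge0.
Qed.

Lemma powR_cmp (A B K e : R) : 0 <= A -> 0 <= B -> 0 <= K -> 0 <= e ->
  A <= K * B -> powR A e <= powR K e * powR B e.
Proof.
move=> A0 B0 K0 e0 h; rewrite -powRM //.
by apply: ge0_ler_powR => //; rewrite nnegrE mulr_ge0.
Qed.

Lemma arith (Pd Pma Pmb Ka Kb q X Y Z : R) :
  0 < Pd -> 0 <= Pma -> Pma <= Ka * Pd -> 0 <= Pmb -> 0 <= Ka -> 0 <= Kb * q ->
  Pmb * X <= Kb * q -> Pmb * Y <= Kb * q -> 0 <= Z -> Z <= X + Y ->
  Pma * Pmb * Z / Pd <= 3 * (Ka * Kb) * q.
Proof.
move=> Pd0 Pma0 h1 Pmb0 Ka0 Kq h2 h3 Z0 h4.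
rewrite ler_pdivrMr //.
have e1 : Pma * Pmb * Z <= Ka * Pd * (Pmb * Z).
  by rewrite -mulrA ler_wpM2r // mulr_ge0.
have e2 : Pmb * Z <= 2 * (Kb * q).
  apply: le_trans (_ : Pmb * (X + Y) <= _); first by rewrite ler_wpM2l.
  by rewrite mulrDr; lra.
apply: (le_trans e1).
have e3 : Ka * Pd * (Pmb * Z) <= Ka * Pd * (2 * (Kb * q)).
  by apply: ler_wpM2l => //; rewrite mulr_ge0 // ltW.
apply: (le_trans e3).
have : 0 <= Ka * Pd * (Kb * q) by apply: mulr_ge0 => //; apply: mulr_ge0 => //; exact: ltW.
move=> h; have -> : 3 * (Ka * Kb) * q * Pd = 3 * (Ka * Pd * (Kb * q)) by ring.
have -> : Ka * Pd * (2 * (Kb * q)) = 2 * (Ka * Pd * (Kb * q)) by ring.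
lra.
Qed.

Section Geo.
Variable N : nat.
Local Notation pt := ('I_N -> R).
Implicit Types x y z : pt.

Lemma sumsq_ge0 (a : 'I_N -> R) : 0 <= \sum_(i < N) a i ^+ 2.
Proof. by apply: sumr_ge0 => i _; rewrite sqr_ge0. Qed.

Lemma sumsq_eq0 (a : 'I_N -> R) : \sum_(i < N) a i ^+ 2 = 0 -> forall i, a i = 0.
Proof.
move=> h i; have := psumr_eq0P (P := xpredT) (F := fun i => a i ^+ 2).
by move=> /(_ (fun i _ => sqr_ge0 (a i)) h i isT) /eqP; rewrite sqrf_eq0 => /eqP.
Qed.

Lemma cauchy_schwarz (a b : 'I_N -> R) :
  \sum_(i < N) a i * b i <=
  Num.sqrt (\sum_(i < N) a i ^+ 2) * Num.sqrt (\sum_(i < N) b i ^+ 2).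
Proof.
set A := Num.sqrt _; set B := Num.sqrt _.
have A0 : 0 <= A by apply: sqrtr_ge0.
have B0 : 0 <= B by apply: sqrtr_ge0.
have [A00|Apos] := eqVneq A 0.
  have h : \sum_(i < N) a i ^+ 2 = 0.
    by apply/eqP; rewrite eq_le sumsq_ge0 andbT -sqrtr_eq0; apply/eqP.
  rewrite big1 ?mulr_ge0 // => i _; by rewrite (sumsq_eq0 h) mul0r.
have [B00|Bpos] := eqVneq B 0.
  have h : \sum_(i < N) b i ^+ 2 = 0.
    by apply/eqP; rewrite eq_le sumsq_ge0 andbT -sqrtr_eq0; apply/eqP.
  rewrite big1 ?mulr_ge0 // => i _; by rewrite (sumsq_eq0 h) mulr0.
have Ap : 0 < A by rewrite lt_def Apos A0.
have Bp : 0 < B by rewrite lt_def Bpos B0.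
have key : \sum_(i < N) (a i * b i) * (2 * A * B) <=
           \sum_(i < N) (a i ^+ 2 * B ^+ 2 + b i ^+ 2 * A ^+ 2).
  apply: ler_sum => i _.
  rewrite -subr_ge0.
  have -> : a i ^+ 2 * B ^+ 2 + b i ^+ 2 * A ^+ 2 - a i * b i * (2 * A * B) =
            (a i * B - b i * A) ^+ 2 by ring.
  exact: sqr_ge0.
rewrite -mulr_suml big_split /= -!mulr_suml !sqr_sqrtr ?sumsq_ge0 // in key.
rewrite -(ler_pM2r (_ : 0 < 2 * A * B)); last by rewrite !mulr_gt0.
apply: (le_trans key).
have -> : A * B * (2 * A * B) = 2 * (A ^+ 2 * B ^+ 2) by ring.
rewrite /A /B !sqr_sqrtr ?sumsq_ge0 //.
rewrite le_eqVlt; apply/orP; left; apply/eqP; ring.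
Qed.

Lemma edist_ge0 x y : 0 <= edist x y.
Proof. exact: sqrtr_ge0. Qed.

Lemma edistxx x : edist x x = 0.
Proof. by rewrite /edist big1 ?sqrtr0 // => i _; rewrite subrr expr0n. Qed.

Lemma edistC x y : edist x y = edist y x.
Proof. by rewrite /edist; congr Num.sqrt; apply: eq_bigr => i _; rewrite -sqrrN opprB. Qed.

Lemma edist_gt0 x y : x <> y -> 0 < edist x y.
Proof.
move=> xy; rewrite lt_def edist_ge0 andbT; apply/negP => /eqP h.
apply: xy; apply: funext => i; apply/eqP; rewrite -subr_eq0; apply/eqP.
apply: (sumsq_eq0 (a := fun i => x i - y i)) => //.
by apply/eqP; rewrite eq_le sumsq_ge0 andbT -sqrtr_eq0 -/(edist x y) h.
Qed.

Lemma edist_triangle x y z : edist x z <= edist x y + edist y z.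
Proof.
rewrite /edist; set A := Num.sqrt (\sum_(i < N) (x i - y i) ^+ 2).
set B := Num.sqrt (\sum_(i < N) (y i - z i) ^+ 2).
have A0 : 0 <= A by apply: sqrtr_ge0.
have B0 : 0 <= B by apply: sqrtr_ge0.
rewrite -[A + B]ger0_norm ?addr_ge0 // -sqrtr_sqr ler_sqrt ?sqr_ge0 //.
have -> : \sum_(i < N) (x i - z i) ^+ 2 =
   \sum_(i < N) (x i - y i) ^+ 2 + \sum_(i < N) (y i - z i) ^+ 2 +
   2 * \sum_(i < N) (x i - y i) * (y i - z i).
  rewrite mulr_sumr -!big_split /=; apply: eq_bigr => i _; ring.
have -> : (A + B) ^+ 2 = A ^+ 2 + B ^+ 2 + 2 * (A * B) by ring.
rewrite /A /B !sqr_sqrtr ?sumsq_ge0 // lerD2l ler_pM2l //.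
exact: (cauchy_schwarz (fun i => x i - y i) (fun i => y i - z i)).
Qed.

Definition seg x y (t : R) : pt := fun i => x i + t * (y i - x i).

Lemma seg0 x y : seg x y 0 = x.
Proof. by apply: funext => i; rewrite /seg mul0r addr0. Qed.

Lemma seg1 x y : seg x y 1 = y.
Proof. by apply: funext => i; rewrite /seg mul1r addrC subrK. Qed.

Lemma edist_seg x y t s : edist (seg x y t) (seg x y s) = `|t - s| * edist x y.
Proof.
rewrite /edist /seg.
have -> : \sum_(i < N) (x i + t * (y i - x i) - (x i + s * (y i - x i))) ^+ 2 =
          (t - s) ^+ 2 * \sum_(i < N) (x i - y i) ^+ 2.
  by rewrite mulr_sumr; apply: eq_bigr => i _; ring.
by rewrite sqrtrM ?sqr_ge0 // sqrtr_sqr.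
Qed.

End Geo.

Section Dom.
Variable N : nat.
Local Notation pt := ('I_N -> R).
Implicit Types (x y z : pt) (Om : set pt).

Lemma bd_notin Om z : eopen Om -> eboundary Om z -> ~ Om z.
Proof.
move=> oOm bz Oz; have [e e0 sub] := oOm z Oz.
have [_ [w [bw nw]]] := bz e e0; exact: nw (sub _ bw).
Qed.

Lemma edist_bd_le Om x (Rad : R) : inner_radius Om = Rad%:E -> Om x ->
  (edist_bd Om x <= Rad%:E)%E.
Proof. by move=> <- Ox; apply: ereal_sup_ubound; exists x. Qed.

Lemma bd_lb Om x y (rho : R) : eopen Om -> eball x rho `<=` Om ->
  ((rho - edist x y)%:E <= edist_bd Om y)%E.
Proof.
move=> oOm sub; apply: le_ereal_inf_tmp => w [z bz <-]; rewrite lee_fin.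
have nz := bd_notin oOm bz.
have : ~ (edist x z < rho) by move=> h; apply: nz; apply: sub.
move/negP; rewrite -leNgt => h.
rewrite lerBlDl; apply: le_trans h _; exact: edist_triangle.
Qed.

Lemma dU_bounds Om x y (rho Rad : R) : eopen Om -> inner_radius Om = Rad%:E ->
  eball x rho `<=` Om -> Om y ->
  rho - edist x y <= dU Om y /\ dU Om y <= Rad.
Proof.
move=> oOm hR sub Oy; have h1 := bd_lb y oOm sub; have h2 := edist_bd_le hR Oy.
rewrite /dU; move: h1 h2; case: (edist_bd Om y) => [e| |] //=; rewrite !lee_fin => -> ->.
Qed.

Lemma seg_boundary Om x y : Om x -> ~ Om y ->
  exists z, eboundary Om z /\ edist x z <= edist x y.
Proof.
move=> Ox Ny; set d := edist x y.
have d0 : 0 <= d by exact: edist_ge0.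
pose T := [set t : R | 0 <= t <= 1 /\ ~ Om (seg x y t)].
have T1 : T 1 by split; [rewrite ler01 lexx | rewrite seg1].
have lT : lbound T 0 by move=> t [/andP[]].
have hlT : has_lbound T by exists 0.
have hiT : has_inf T by split => //; exists 1.
set ts := inf T.
have ts0 : 0 <= ts by apply: lb_le_inf => //; exists 1.
have ts1 : ts <= 1 by apply: ge_inf.
have below : forall s, 0 <= s -> s < ts -> Om (seg x y s).
  move=> s s0 sts; apply: contrapT => ns.
  have : ts <= s by apply: ge_inf => //; split => //; rewrite s0 /=; apply: ltW (lt_le_trans sts ts1).
  by rewrite leNgt sts.
exists (seg x y ts); split; last first.
  rewrite -[X in edist X _](seg0 x y) edist_seg sub0r normrN ger0_norm //.
  by rewrite -[X in _ <= X]mul1r ler_wpM2r.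
move=> e e0; set eta := e / (d + 1).
have d1 : 0 < d + 1 by rewrite ltr_pwDr.
have eta0 : 0 < eta by rewrite divr_gt0.
have etad : eta * d < e.
  by rewrite /eta mulrAC ltr_pdivrMr // ltr_pM2l // ltrDl.
split.
  have [Oz|Nz] := pselect (Om (seg x y ts)).
    by exists (seg x y ts); split => //; rewrite /eball /= edistxx.
  have tsp : 0 < ts.
    rewrite lt_def ts0 andbT; apply/negP => /eqP ts00.
    by apply: Nz; rewrite ts00 seg0.
  set s := Order.max 0 (ts - eta).
  have s0 : 0 <= s by rewrite le_max lexx.
  have sts : s < ts by rewrite gt_max tsp /= ltrBlDr ltrDl.
  exists (seg x y s); split; last by apply: below.
  rewrite /eball /= edist_seg ger0_norm ?subr_ge0 ?ltW //.
  apply: le_lt_trans etad; apply: ler_wpM2r => //.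
  by rewrite lerBlDl -lerBlDr le_max lexx orbT.
have [t Tt tlt] := inf_adherent eta0 hiT.
exists (seg x y t); split; last by case: Tt.
have tst : ts <= t by apply: ge_inf.
rewrite /eball /= edist_seg ler0_norm ?subr_le0 // opprB.
apply: le_lt_trans etad; apply: ler_wpM2r => //.
by have := tlt; lra.
Qed.

Lemma ball_dU Om x (Rad : R) : inner_radius Om = Rad%:E -> Om x ->
  eball x (dU Om x) `<=` Om.
Proof.
move=> hR Ox y bxy; apply: contrapT => Ny.
have [z [bz hz]] := seg_boundary Ox Ny.
have h1 : (edist_bd Om x <= (edist x z)%:E)%E.
  by apply: ereal_inf_lbound; exists z.
move: bxy; rewrite /eball /= /dU; move: h1.
case: (edist_bd Om x) => [e| |] //=.
- rewrite lee_fin => h1 h2.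
  by have := lt_le_trans h2 (le_trans h1 hz); rewrite ltxx.
- by move=> _; rewrite ltNge edist_ge0.
Qed.

End Dom.

Section Main.
Variables (N : nat) (a b r0 lam : R).
Hypotheses (a0 : 0 <= a) (b0 : 0 <= b) (r00 : 0 < r0) (lam1 : 1 < lam).
Local Notation pt := ('I_N -> R).

Lemma LF (Om : set pt) (u : pt -> R) x r q : 0 < r -> r < r0 ->
  eball x (lam * r) `<=` Om -> local_quantity a b r0 lam Om u = q%:E ->
  (forall y, eball x r y -> powR (ell r) b * `|u y| <= q) /\
  (forall y z, eball x r y -> eball x r z -> y <> z ->
     powR (ell r) (a + b) * `|u y - u z| / powR (ell (edist y z)) a <= q).
Proof.
move=> r0' rr0 sub hQ.
have hE : ((powR (ell r) b)%:E * supnorm (eball x r) u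
    + (powR (ell r) (a + b))%:E * Lsemi a (eball x r) u <= q%:E)%E.
  by rewrite -hQ; apply: le_esup0; exists x, r; split.
have X0 : (0 <= (powR (ell r) b)%:E * supnorm (eball x r) u)%E.
  by apply: mule_ge0; [rewrite lee_fin powR_ge0 | apply: esup0_ge0].
have Y0 : (0 <= (powR (ell r) (a + b))%:E * Lsemi a (eball x r) u)%E.
  by apply: mule_ge0; [rewrite lee_fin powR_ge0 | apply: esup0_ge0].
split.
  move=> y by'; rewrite -lee_fin; apply: le_trans hE.
  apply: (le_trans _ (leeDl _ Y0)); rewrite EFinM.
  apply: lee_wpmul2l; first by rewrite lee_fin powR_ge0.
  by apply: le_esup0; exists y.
move=> y z by' bz yz; rewrite -lee_fin; apply: le_trans hE.
rewrite addeC; apply: (le_trans _ (leeDl _ X0)); rewrite -mulrA EFinM.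
apply: lee_wpmul2l; first by rewrite lee_fin powR_ge0.
by apply: le_esup0; exists y, z; split.
Qed.

Definition th (Rad : R) : R := r0 / (2 * lam * (`|Rad| + r0)).
Definition KL (Rad : R) : R := KK (th Rad)^-1.

Lemma th_gt0 Rad : 0 < th Rad.
Proof.
rewrite /th divr_gt0 // mulr_gt0 // ?mulr_gt0 //; first by apply: lt_trans lam1.
by rewrite ltr_wpDl.
Qed.

Lemma th_le1 Rad : th Rad <= 1.
Proof.
have l0 : 0 < lam by apply: lt_trans lam1.
have D0 : 0 < `|Rad| + r0 by rewrite ltr_wpDl.
rewrite /th ler_pdivrMr ?mul1r ?mulr_gt0 //.
have : r0 <= `|Rad| + r0 by rewrite lerDr.
have : 1 <= 2 * lam by have := lam1; lra.
move=> h1 h2; apply: le_trans h2 _; rewrite -[X in X <= _]mul1r.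
by rewrite ler_wpM2r // ltW.
Qed.

Lemma thV_ge1 Rad : 1 <= (th Rad)^-1.
Proof. by rewrite invf_ge1 ?th_le1 ?th_gt0. Qed.

Lemma KL_ge1 Rad : 1 <= KL Rad.
Proof. exact/KK_ge1/thV_ge1. Qed.

Lemma dU_pos (Om : set pt) x Rad : eopen Om -> inner_radius Om = Rad%:E -> Om x ->
  0 < dU Om x /\ dU Om x <= `|Rad|.
Proof.
move=> oOm hR Ox; have [e e0 sub] := oOm x Ox.
have [h1 h2] := dU_bounds oOm hR sub Ox.
rewrite edistxx subr0 in h1; split; first by apply: lt_le_trans h1.
by apply: le_trans h2 _; rewrite ler_norm.
Qed.

Lemma LB_choose (Om : set pt) x m Rad : eopen Om -> inner_radius Om = Rad%:E ->
  Om x -> 0 < m -> m <= dU Om x ->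
  [/\ 0 < th Rad * m, th Rad * m < r0, eball x (lam * (th Rad * m)) `<=` Om &
      ell m <= KL Rad * ell (th Rad * m)].
Proof.
move=> oOm hR Ox m0 md.
have [d0 dR] := dU_pos oOm hR Ox.
have t0 := th_gt0 Rad.
have l0 : 0 < lam by apply: lt_trans lam1.
have D0 : 0 < `|Rad| + r0 by rewrite ltr_wpDl.
have thD : th Rad * (`|Rad| + r0) = r0 / (2 * lam).
  by rewrite /th; field; rewrite ?gt_eqF ?lt0r_neq0 //; lra.
have lth : lam * th Rad * (`|Rad| + r0) = r0 / 2.
  by rewrite -mulrA thD; field; rewrite gt_eqF.
have r0p : 0 < r0 / 2 by rewrite divr_gt0.
split.
- by rewrite mulr_gt0.
- apply: le_lt_trans (_ : th Rad * (`|Rad| + r0) < r0).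
    rewrite ler_pM2l //; apply: le_trans md _; apply: le_trans dR _; rewrite lerDl ltW //.
  rewrite thD ltr_pdivrMr ?mulr_gt0 //; rewrite -[X in X < _]mulr1 ltr_pM2l //; have := lam1; lra.
- apply: subset_trans (ball_dU hR Ox) => y; rewrite /eball /= => h.
  apply: lt_le_trans h _.
  have h1 : lam * th Rad <= 2^-1.
    have -> : lam * th Rad = r0 / (2 * (`|Rad| + r0)).
      by rewrite /th; field; rewrite ?gt_eqF //; have := lam1; lra.
    rewrite ler_pdivrMr ?mulr_gt0 //.
    by have := normr_ge0 Rad; have := r00; lra.
  have lt0 : 0 < lam * th Rad by rewrite mulr_gt0.
  rewrite mulrA; apply: le_trans (_ : lam * th Rad * dU Om x <= _).
    by rewrite ler_pM2l.
  apply: le_trans (_ : 2^-1 * dU Om x <= _); first by rewrite ler_pM2r.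
  lra.
- apply: ell_cmp; [exact: thV_ge1 | by rewrite mulr_gt0 | by [] |].
  by rewrite mulrA mulVf ?gt_eqF // mul1r.
Qed.

Lemma ell_mono (rho sig : R) : 0 < rho -> rho <= sig -> ell rho <= ell sig.
Proof.
move=> r0' rs; have := @ell_cmp 1 rho sig (lexx 1) (lt_le_trans r0' rs) r0'.
by rewrite mul1r /KK ln1 mul0r addr0 mul1r; apply.
Qed.

Lemma powR_mono (e A B : R) : 0 <= e -> 0 <= A -> A <= B -> powR A e <= powR B e.
Proof. by move=> e0 A0 AB; apply: ge0_ler_powR => //; rewrite nnegrE (le_trans A0). Qed.

Lemma lower (Om : set pt) (u : pt -> R) Rad : eopen Om -> inner_radius Om = Rad%:E ->
  (((powR (KL Rad) b + 3 * powR (KL Rad) (a + b))^-1)%:E * Lnormw a b Om u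
     <= local_quantity a b r0 lam Om u)%E.
Proof.
move=> oOm hR.
set K := KL Rad.
have K1 : 1 <= K by apply: KL_ge1.
have K0 : 0 <= K by apply: le_trans K1.
have Kp : 0 < K by apply: lt_le_trans K1.
have Q0 : (0 <= local_quantity a b r0 lam Om u)%E by apply: esup0_ge0.
have [[q hQ]|hQ] : (exists q, local_quantity a b r0 lam Om u = q%:E) \/
    local_quantity a b r0 lam Om u = +oo%E.
  by move: Q0; case: (local_quantity _ _ _ _ _ _) => [q _| |]; [left; exists q | right |].
  2: by rewrite hQ leey.
have q0 : 0 <= q by rewrite -lee_fin -hQ.
rewrite hQ.
have Apt : forall x, Om x -> powR (ell (dU Om x)) b * `|u x| <= powR K b * q.
  move=> x Ox; have [d0 _] := dU_pos oOm hR Ox.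
  have [rp rr0 sub hell] := LB_choose oOm hR Ox d0 (lexx _).
  have [h1 _] := LF rp rr0 sub hQ.
  have hx := h1 x; rewrite /eball /= edistxx in hx; have {hx} hx := hx rp.
  apply: le_trans (_ : powR K b * powR (ell (th Rad * dU Om x)) b * `|u x| <= _).
    apply: ler_wpM2r => //; apply: powR_cmp => //; by [apply: ell_ge0 | apply: ell_ge0].
  by rewrite -mulrA ler_wpM2l // powR_ge0.
have Spt : forall x y, Om x -> Om y -> x <> y ->
   powR (ell (dU2 Om x y)) (a + b) * `|u x - u y| / powR (ell (edist x y)) a
     <= 3 * (powR K a * powR K b) * q.
  move=> x y Ox Oy xy.
  have [dx0 _] := dU_pos oOm hR Ox; have [dy0 _] := dU_pos oOm hR Oy.
  set m := dU2 Om x y.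
  have m0 : 0 < m by rewrite /m /dU2 lt_min dx0 dy0.
  have mx : m <= dU Om x by rewrite /m /dU2 ge_min lexx.
  have my : m <= dU Om y by rewrite /m /dU2 ge_min lexx orbT.
  have del0 : 0 < edist x y by apply: edist_gt0.
  have Pd0 : 0 < powR (ell (edist x y)) a by apply/powR_gt0/ell_gt0.
  have [rp rr0 sub hell] := LB_choose oOm hR Ox m0 mx.
  have [hA hS] := LF rp rr0 sub hQ.
  have KS0 : 0 <= powR K a * powR K b by rewrite mulr_ge0 ?powR_ge0.
  case: (ltP (edist x y) (th Rad * m)) => hd.
  - have := hS x y; rewrite /eball /= edistxx => /(_ rp hd xy) h.
    have hp : powR (ell m) (a + b) <= powR K (a + b) * powR (ell (th Rad * m)) (a + b).
      by apply: powR_cmp => //; [apply: ell_ge0 | apply: ell_ge0 | rewrite addr_ge0].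
    rewrite -powRD; last by rewrite (gt_eqF Kp) implybT.
    apply: le_trans (_ : powR K (a + b) * q <= _); last first.
      by rewrite ler_wpM2r // ler_peMl ?powR_ge0 // ler1n.
    apply: le_trans (_ : powR K (a + b) * (powR (ell (th Rad * m)) (a + b) *
        `|u x - u y| / powR (ell (edist x y)) a) <= _); last first.
      by rewrite ler_wpM2l // powR_ge0.
    rewrite !mulrA ler_wpM2r ?invr_ge0 ?powR_ge0 // ler_wpM2r //.
  - have tV0 : 0 < (th Rad)^-1 by rewrite invr_gt0 th_gt0.
    have hm : m <= (th Rad)^-1 * edist x y.
      by rewrite -(ler_pM2l (th_gt0 Rad)) mulrA mulfV ?gt_eqF ?th_gt0 // mul1r.
    have em : ell m <= K * ell (edist x y) by apply: ell_cmp => //; exact: thV_ge1.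
    have hma : powR (ell m) a <= powR K a * powR (ell (edist x y)) a.
      by apply: powR_cmp => //; [apply: ell_ge0 | apply: ell_ge0].
    rewrite powRD; last by apply/implyP => _; rewrite gt_eqF // ell_gt0.
    have hmb : forall z, Om z -> m <= dU Om z ->
        powR (ell m) b * `|u z| <= powR K b * q.
      move=> z Oz mz; apply: le_trans (Apt z Oz); apply: ler_wpM2r => //.
      by apply: powR_mono => //; [apply: ell_ge0 | apply: ell_mono].
    apply: (arith Pd0 (powR_ge0 _ _) hma (powR_ge0 _ _) (powR_ge0 _ _)).
    + by rewrite mulr_ge0 ?powR_ge0.
    + exact: hmb x Ox mx.
    + exact: hmb y Oy my.
    + by [].
    + by rewrite ler_normB.
set c := _^-1.
have KK0 : 0 < powR K b + 3 * powR K (a + b).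
  by rewrite ltr_wpDr ?mulr_ge0 ?powR_ge0 // powR_gt0 // (lt_le_trans ltr01).
have c0 : 0 < c by rewrite invr_gt0.
have hA : (esup0 [set (powR (ell (dU Om x)) b * `|u x|)%:E | x in Om]
    <= (powR K b * q)%:E)%E.
  apply: esup0_le; first by rewrite lee_fin mulr_ge0 ?powR_ge0.
  by move=> z [x Ox <-]; rewrite lee_fin; apply: Apt.
have hS : (Lsemiw a b Om u <= (3 * (powR K a * powR K b) * q)%:E)%E.
  apply: esup0_le; first by rewrite lee_fin mulr_ge0 // mulr_ge0 // mulr_ge0 ?powR_ge0.
  move=> z [x [y [Ox Oy xy ->]]]; rewrite lee_fin; exact: Spt.
rewrite /Lnormw.
apply: le_trans (_ : c%:E * ((powR K b * q)%:E + (3 * (powR K a * powR K b) * q)%:E) <= _)%E.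
  by apply: lee_wpmul2l; [rewrite lee_fin ltW | apply: leeD].
rewrite -EFinD -EFinM lee_fin -powRD; last by rewrite (gt_eqF Kp) implybT.
rewrite -mulrDl mulrA /c mulVf ?mul1r // gt_eqF //.
Qed.

Definition KU : R := KK (Order.max 1 (lam - 1)^-1).

Lemma KU_ge1 : 1 <= KU.
Proof. by apply: KK_ge1; rewrite le_max lexx. Qed.

Lemma upper (Om : set pt) (u : pt -> R) Rad : eopen Om -> inner_radius Om = Rad%:E ->
  (local_quantity a b r0 lam Om u <=
    (powR KU b + powR KU (a + b))%:E * Lnormw a b Om u)%E.
Proof.
move=> oOm hR.
set K := KU; set k2 := Order.max 1 (lam - 1)^-1.
have K1 : 1 <= K by apply: KU_ge1.
have Kp : 0 < K by apply: lt_le_trans K1.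
have l10 : 0 < lam - 1 by rewrite subr_gt0.
have k21 : 1 <= k2 by rewrite le_max lexx.
set C := powR K b + powR K (a + b).
have C0 : 0 < C by rewrite ltr_wpDr ?powR_ge0 // powR_gt0.
have A0 : (0 <= esup0 [set (powR (ell (dU Om x)) b * `|u x|)%:E | x in Om])%E
  by apply: esup0_ge0.
have S0 : (0 <= Lsemiw a b Om u)%E by apply: esup0_ge0.
have -> : Lnormw a b Om u = (esup0 [set (powR (ell (dU Om x)) b * `|u x|)%:E | x in Om]
   + Lsemiw a b Om u)%E by [].
case ha : (esup0 [set (powR (ell (dU Om x)) b * `|u x|)%:E | x in Om]) A0 => [a'| |] // A0.
  2: by rewrite addye ?gt0_muley ?lte_fin ?leey // gt_eqF // (lt_le_trans _ S0).
case hs : (Lsemiw a b Om u) S0 => [s'| |] // S0.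
  2: by rewrite addey // gt0_muley ?lte_fin ?leey.
rewrite -EFinD -EFinM.
have a'0 : 0 <= a' by rewrite -lee_fin.
have s'0 : 0 <= s' by rewrite -lee_fin.
have Apt : forall y, Om y -> powR (ell (dU Om y)) b * `|u y| <= a'.
  by move=> y Oy; rewrite -lee_fin -ha; apply: le_esup0; exists y.
have Spt : forall y z, Om y -> Om z -> y <> z ->
    powR (ell (dU2 Om y z)) (a + b) * `|u y - u z| / powR (ell (edist y z)) a <= s'.
  by move=> y z Oy Oz yz; rewrite -lee_fin -hs; apply: le_esup0; exists y, z; split.
apply: esup0_le; first by rewrite lee_fin; apply: mulr_ge0; [exact: ltW | exact: addr_ge0].
move=> w [x [r [rp rr0 sub ->]]].
have lr : r < lam * r by rewrite ltr_pMl.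
have key : forall y, eball x r y ->
    [/\ Om y, 0 < dU Om y & r <= k2 * dU Om y].
  move=> y by'.
  have Oy : Om y by apply: sub; apply: lt_trans lr.
  have [h1 _] := dU_bounds oOm hR sub Oy.
  have h2 : (lam - 1) * r < dU Om y.
    by apply: lt_le_trans h1; move: by'; rewrite /eball /= => h; lra.
  split => //; first by apply: le_lt_trans h2; rewrite mulr_ge0 // ?ltW.
  apply: le_trans (_ : (lam - 1)^-1 * dU Om y <= _); last first.
    by rewrite ler_wpM2r ?le_max ?lexx ?orbT //; apply: ltW; apply: lt_trans h2; rewrite mulr_gt0.
  by rewrite -(ler_pM2l l10) mulrA mulfV ?gt_eqF // mul1r ltW.
have er : 0 < ell r by apply: ell_gt0.
set pb := powR (ell r) b; set pab := powR (ell r) (a + b).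
have pb0 : 0 < pb by apply: powR_gt0.
have pab0 : 0 < pab by apply: powR_gt0.
have hsup : (supnorm (eball x r) u <= (powR K b * a' / pb)%:E)%E.
  apply: esup0_le; first by rewrite lee_fin divr_ge0 ?mulr_ge0 ?powR_ge0 // ltW.
  move=> w' [y by' <-]; rewrite lee_fin ler_pdivlMr // mulrC.
  have [Oy dy0 ry] := key y by'.
  apply: le_trans (_ : powR K b * powR (ell (dU Om y)) b * `|u y| <= _).
    apply: ler_wpM2r => //; apply: powR_cmp;
      [exact: ell_ge0 | exact: ell_ge0 | exact: ltW | exact: b0 | rewrite /K /KU; exact: ell_cmp].
  by rewrite -mulrA ler_wpM2l ?powR_ge0 // Apt.
have hsemi : (Lsemi a (eball x r) u <= (powR K (a + b) * s' / pab)%:E)%E.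
  apply: esup0_le; first by rewrite lee_fin divr_ge0 ?mulr_ge0 ?powR_ge0 // ltW.
  move=> w' [y [z [by' bz yz ->]]]; rewrite lee_fin ler_pdivlMr // mulrC.
  have [Oy dy0 ry] := key y by'; have [Oz dz0 rz] := key z bz.
  have k20 : 0 < k2 by apply: lt_le_trans k21.
  have m0 : 0 < dU2 Om y z by rewrite /dU2 lt_min dy0 dz0.
  have rm : r <= k2 * dU2 Om y z.
    rewrite -ler_pdivrMl // /dU2 le_min !ler_pdivrMl // ry rz //.
  apply: le_trans (_ : powR K (a + b) * (powR (ell (dU2 Om y z)) (a + b) *
       `|u y - u z| / powR (ell (edist y z)) a) <= _); last first.
    by rewrite ler_wpM2l ?powR_ge0 // Spt.
  rewrite !mulrA ler_wpM2r ?invr_ge0 ?powR_ge0 // ler_wpM2r //.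
  apply: powR_cmp;
    [exact: ell_ge0 | exact: ell_ge0 | exact: ltW | exact: addr_ge0 | rewrite /K /KU; exact: ell_cmp].
apply: le_trans (_ : (pb%:E * (powR K b * a' / pb)%:E +
    pab%:E * (powR K (a + b) * s' / pab)%:E <= _)%E).
  apply: leeD; apply: lee_wpmul2l => //; rewrite lee_fin ltW //.
rewrite -!EFinM -EFinD lee_fin (mulrC pb) (mulrC pab) !divfK ?gt_eqF //.
rewrite mulrDr /C lerD //; rewrite ler_wpM2r //.
  by rewrite lerDl powR_ge0.
by rewrite lerDr powR_ge0.
Qed.

End Main.

End Aux.

Theorem lemma3p2 (R : realType) (N : nat) (Rad a b r0 lam : R) :
  0 <= a -> 0 <= b -> 0 < r0 -> 1 < lam ->
  exists c C : R, [/\ 0 < c, 0 < C &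
    forall (Om : set ('I_N -> R)) (u : ('I_N -> R) -> R),
      eopen Om -> inner_radius Om = Rad%:E ->
      (c%:E * Lnormw a b Om u <= local_quantity a b r0 lam Om u)%E /\
      (local_quantity a b r0 lam Om u <= C%:E * Lnormw a b Om u)%E].
Proof.
move=> a0 b0 r00 lam1.
exists ((powR (KL r0 lam Rad) b + 3 * powR (KL r0 lam Rad) (a + b))^-1),
  (powR (KU lam) b + powR (KU lam) (a + b)).
have K1 : 1 <= KL r0 lam Rad by apply: KL_ge1.
have K2 : 1 <= KU lam by apply: KU_ge1.
split.
- rewrite invr_gt0 ltr_wpDr ?mulr_ge0 ?powR_ge0 //.
  by apply: powR_gt0; apply: lt_le_trans K1.
- by rewrite ltr_wpDr ?powR_ge0 // powR_gt0 // (lt_le_trans _ K2).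
- move=> Om u oOm hR; split.
    exact: (lower a0 b0 r00 lam1 u oOm hR).
  exact: (upper r0 a0 b0 lam1 u oOm hR).
Qed.
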